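(* Let $1\leq k\leq n$. (1) Let $X$ be an $(n,k)$ right Gog trapezoid. Among all Gog triangles of size $n$ whose entries with $i-j\leq k-1$ coincide with $X$, there is an entrywise smallest one, and it satisfies $X_{i,j}=j$ for $i\geq j+k$. (2) Let $X$ be an $(n,k)$ left Gog trapezoid. Among all Gog triangles of size $n$ whose entries with $j\leq k$ coincide with $X$, there is an entrywise smallest one, and it satisfies, for $j\geq k$, $$X_{i,j}=\max\big(X_{i,k}+j-k,\ X_{i-1,k}+j-k-1,\ \dots,\ X_{i-j+k,k}\big).$$
   Context: A Gelfand–Tsetlin triangle of size $n$ is an array $X=(X_{i,j})_{n\geq i\geq j\geq 1}$ of positive integers (row $n$ is the top row, row $1$ the bottom) with $X_{i+1,j}\leq X_{i,j}\leq X_{i+1,j+1}$ for all $n-1\geq i\geq j\geq 1$. A Gog triangle of size $n$ is a Gelfand–Tsetlin triangle with strictly increasing rows and top row $X_{n,j}=j$, $1\leq j\leq n$. Triangles are ordered entrywise. An $(n,k)$ right Gog trapezoid is the array $(X_{i,j})_{n\geq i\geq j\geq 1,\ i-j\leq k-1}$ of entries of some Gog triangle of size $n$ lying in its $k$ rightmost SW–NE diagonals; an $(n,k)$ left Gog trapezoid is the array $(X_{i,j})_{n\geq i\geq j\geq 1,\ j\leq k}$ of entries of some Gog triangle of size $n$ lying in its $k$ leftmost NW–SE diagonals. *)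

(* Defs.v *)
From mathcomp Require Import all_boot.
Set Implicit Arguments. Unset Strict Implicit. Unset Printing Implicit Defensive.

(* A triangular array of size n is represented by a function X : nat -> nat -> nat;
   only the entries X i j with 1 <= j <= i <= n are meaningful
   (row n is the top row, row 1 the bottom). *)
Definition tarray := nat -> nat -> nat.

Definition in_tri (n i j : nat) : bool := (1 <= j) && (j <= i) && (i <= n).

Definition GT_triangle (n : nat) (X : tarray) : Prop :=
  (forall i j, in_tri n i j -> 0 < X i j) /\
  (forall i j, 1 <= j -> j <= i -> i <= n - 1 ->
      X i.+1 j <= X i j /\ X i j <= X i.+1 j.+1).

Definition Gog_triangle (n : nat) (X : tarray) : Prop :=
  GT_triangle n X /\
  (forall i j, 1 <= j -> j < i -> i <= n -> X i j < X i j.+1) /\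
  (forall j, 1 <= j -> j <= n -> X n j = j).

Definition in_right (n k i j : nat) : bool := in_tri n i j && (i - j <= k - 1).
Definition in_left (n k i j : nat) : bool := in_tri n i j && (j <= k).

Definition agree_on (D : nat -> nat -> bool) (X Y : tarray) : Prop :=
  forall i j, D i j -> X i j = Y i j.

Definition right_Gog_trapezoid (n k : nat) (X : tarray) : Prop :=
  exists T, Gog_triangle n T /\ agree_on (in_right n k) X T.
Definition left_Gog_trapezoid (n k : nat) (X : tarray) : Prop :=
  exists T, Gog_triangle n T /\ agree_on (in_left n k) X T.

Definition smallest_Gog_ext (n : nat) (D : nat -> nat -> bool) (X Y : tarray) : Prop :=
  Gog_triangle n Y /\ agree_on D X Y /\
  (forall Z, Gog_triangle n Z -> agree_on D X Z ->
     forall i j, in_tri n i j -> Y i j <= Z i j).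

(* Main.v *)
Require Import Defs.
From mathcomp Require Import all_boot zify.

Lemma maxle N (F : nat -> nat) m : (forall l, l < N -> F l <= m) -> \max_(l < N) F l <= m.
Proof. move=> H; apply/bigmax_leqP => l _; exact: H. Qed.

Lemma lemax N (F : nat -> nat) l : l < N -> F l <= \max_(l < N) F l.
Proof. move=> H; have := @leq_bigmax _ (fun l : 'I_N => F l) (Ordinal H); by []. Qed.

Lemma rowinc n T i a b : Gog_triangle n T -> 1 <= a -> a <= b -> b <= i -> i <= n ->
  T i a + (b - a) <= T i b.
Proof.
move=> [_ [Hr _]] ha; elim: b => [|b IH] hab hbi hin; first by lia.
case: (ltngtP a b.+1) => h; [|lia|].
- have := IH ltac:(lia) ltac:(lia) hin. have := Hr i b ltac:(lia) ltac:(lia) hin. lia.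
- subst; lia.
Qed.

Lemma lowj n T i j : Gog_triangle n T -> in_tri n i j -> j <= T i j.
Proof.
move=> G /andP[/andP[h1 h2] h3].
have := @rowinc n T i 1 j G (leqnn 1) h1 h2 h3.
case: G => [[Hp _] _]. have := Hp i 1 ltac:(rewrite /in_tri; apply/andP; split; [apply/andP; split|]; lia).
lia.
Qed.

Lemma diag n T i j l : Gog_triangle n T -> l < j -> j <= i -> i <= n ->
  T (i - l) (j - l) <= T i j.
Proof.
move=> G; elim: l => [|l IH] hl hji hin; first by rewrite !subn0.
have := IH ltac:(lia) hji hin.
case: G => [[_ Hg] _].
have [_ H2] := Hg (i - l.+1) (j - l.+1) ltac:(lia) ltac:(lia) ltac:(lia).
have -> : (i - l = (i - l.+1).+1) by lia.
have -> : (j - l = (j - l.+1).+1) by lia.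
lia.
Qed.

Lemma part1 n k (hk1 : 1 <= k) (hkn : k <= n) X : right_Gog_trapezoid n k X ->
     exists Y : tarray, smallest_Gog_ext n (in_right n k) X Y /\
       (forall i j, in_tri n i j -> j + k <= i -> Y i j = j).
Proof.
move=> [T [G A]].
have G' := G.
case: G' => [[Hp Hg] [Hr Ht]].
have AT : forall i j, 1 <= j -> j <= i -> i <= n -> i - j <= k - 1 -> X i j = T i j.
  move=> i j a b c d; apply: A; rewrite /in_right /in_tri; apply/andP; split => //.
  apply/andP; split => //; apply/andP; split => //.
have lo : forall i j, 1 <= j -> j <= i -> i <= n -> j <= T i j.
  move=> i j a b c; apply: (@lowj n T i j G); rewrite /in_tri; apply/andP; split => //; apply/andP; split => //.
pose Y := fun i j => if i - j <= k - 1 then X i j else j.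
exists Y; split; last first.
  move=> i j _ h; rewrite /Y ifN //; lia.
split; [|split].
- split; [split|split].
  + move=> i j /andP[/andP[a b] c]; rewrite /Y; case: ifP => h; last lia.
    rewrite AT //; apply: Hp; rewrite /in_tri; apply/andP; split => //; apply/andP; split => //.
  + move=> i j a b c; rewrite /Y.
    have := Hg i j a b c; have := lo i j a b ltac:(lia); have := lo i.+1 j.+1 ltac:(lia) ltac:(lia) ltac:(lia).
    case: (leqP (i - j) (k - 1)) => h1.
    * have e1 : (i.+1 - j.+1 <= k - 1) = true by lia.
      rewrite (AT i j); try lia. rewrite (AT i.+1 j.+1); try lia.
      case: (leqP (i.+1 - j) (k - 1)) => h2; last lia.
      rewrite AT //; lia.
    * have e1 : (i.+1 - j.+1 <= k - 1) = false by lia.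
      have e2 : (i.+1 - j <= k - 1) = false by lia.
      rewrite ?e1 e2; lia.
  + move=> i j a b c; rewrite /Y.
    have := Hr i j a b c; have := lo i j.+1 ltac:(lia) ltac:(lia) ltac:(lia).
    case: (leqP (i - j) (k - 1)) => h1.
    * have e1 : (i - j.+1 <= k - 1) = true by lia.
      rewrite ?e1 (AT i j); try lia. rewrite (AT i j.+1); lia.
    * case: (leqP (i - j.+1) (k - 1)) => h2; last lia.
      rewrite (AT i j.+1) //; lia.
  + move=> j a b; rewrite /Y; case: ifP => h //. rewrite AT //; apply: Ht => //.
- move=> i j /andP[/andP[/andP[a b] c] d]; rewrite /Y ifT //.
- move=> Z GZ AZ i j /andP[/andP[a b] c]; rewrite /Y.
  case: ifP => h.
  + rewrite AZ //; rewrite /in_right /in_tri; apply/andP; split => //; apply/andP; split => //; apply/andP; split => //.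
  + apply: (@lowj n Z i j GZ); rewrite /in_tri; apply/andP; split => //; apply/andP; split => //.
Qed.

Lemma intri n i j : 1 <= j -> j <= i -> i <= n -> in_tri n i j.
Proof. by move=> a b c; rewrite /in_tri a b c. Qed.

Lemma part2 n k (hk1 : 1 <= k) (hkn : k <= n) X : left_Gog_trapezoid n k X ->
     exists Y : tarray, smallest_Gog_ext n (in_left n k) X Y /\
       (forall i j, in_tri n i j -> k <= j ->
          Y i j = \max_(l < (j - k).+1) (X (i - l) k + (j - k - l))).
Proof.
move=> [T [G A]].
have G' := G.
case: G' => [[Hp Hg] [Hr Ht]].
have AT : forall i j, 1 <= j -> j <= i -> i <= n -> j <= k -> X i j = T i j.
  move=> i j a b c d; apply: A; rewrite /in_left intri //.
pose M := fun i j => \max_(l < (j - k).+1) (X (i - l) k + (j - k - l)).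
have MX : forall i, M i k = X i k.
  move=> i; rewrite /M; apply/eqP; rewrite eqn_leq; apply/andP; split.
  - apply: (@maxle _ (fun l => X (i - l) k + (k - k - l))) => l hl; rewrite subnn in hl; case: l hl => // _. by rewrite !subn0 subnn ?addn0.
  - have := @lemax (k - k).+1 (fun l => X (i - l) k + (k - k - l)) 0 isT.
    by rewrite !subn0 subnn ?addn0.
have M0 : forall i j, X i k + (j - k) <= M i j.
  move=> i j; rewrite /M; have := @lemax (j - k).+1 (fun l => X (i - l) k + (j - k - l)) 0 isT.
  by rewrite !subn0.
have LB : forall Z, Gog_triangle n Z -> agree_on (in_left n k) X Z ->
    forall i j, 1 <= j -> j <= i -> i <= n -> k <= j -> M i j <= Z i j.
  move=> Z GZ AZ i j a b c d; rewrite /M; apply: (@maxle _ (fun l => X (i - l) k + (j - k - l))) => l hl.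
  rewrite AZ; last by rewrite /in_left intri //; lia.
  have := @rowinc n Z (i - l) k (j - l) GZ hk1 ltac:(lia) ltac:(lia) ltac:(lia).
  have := @diag n Z i j l GZ ltac:(lia) b c.
  lia.
pose Y := fun i j => if j < k then X i j else M i j.
have YT : forall i j, 1 <= j -> j <= i -> i <= n -> j <= k -> Y i j = T i j.
  move=> i j a b c d; rewrite /Y; case: ltnP => h.
  - by rewrite AT.
  - have e : j = k by lia. subst j. by rewrite MX AT.
have YM : forall i j, k <= j -> Y i j = M i j.
  by move=> i j h; rewrite /Y ltnNge h.
exists Y; split; last first.
  by move=> i j _ h; rewrite YM.
split; [|split].
- split; [split|split].
  + move=> i j /andP[/andP[a b] c]; case: (leqP j k) => h.
    * rewrite YT //; apply: Hp; exact: intri.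
    * rewrite YM; last lia. have := M0 i j. have := Hp i k (@intri n i k hk1 ltac:(lia) c).
      rewrite AT //; lia.
  + move=> i j a b c; case: (ltnP j k) => h.
    * rewrite !YT //; try lia. exact: Hg.
    * rewrite !YM //; try lia. split.
      -- apply: (@maxle _ (fun l => X (i.+1 - l) k + (j - k - l))) => l hl.
         have h1 : i.+1 - l = (i - l).+1 by lia.
         rewrite h1 (AT (i - l).+1 k) //; try lia.
         have := (Hg (i - l) k hk1 ltac:(lia) ltac:(lia)).1.
         have := @lemax (j - k).+1 (fun l => X (i - l) k + (j - k - l)) l hl.
         rewrite (AT (i - l) k) //; try lia. rewrite /M; lia.
      -- apply: (@maxle _ (fun l => X (i - l) k + (j - k - l))) => l hl.
         have := @lemax (j.+1 - k).+1 (fun l => X (i.+1 - l) k + (j.+1 - k - l)) l.+1 ltac:(lia).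
         have -> : i.+1 - l.+1 = i - l by lia.
         have -> : j.+1 - k - l.+1 = j - k - l by lia.
         by rewrite /M.
  + move=> i j a b c; case: (ltnP j k) => h.
    * rewrite !YT //; try lia. exact: Hr.
    * rewrite !YM //; try lia.
      have hm : forall l, l < (j - k).+1 -> X (i - l) k + (j - k - l) <= (M i j.+1).-1.
        move=> l hl.
        have := @lemax (j.+1 - k).+1 (fun l => X (i - l) k + (j.+1 - k - l)) l ltac:(lia).
        rewrite /M /=. lia.
      have := @maxle _ (fun l => X (i - l) k + (j - k - l)) _ hm. have := @lemax (j.+1 - k).+1 (fun l => X (i - l) k + (j.+1 - k - l)) 0 isT. rewrite /M /=. lia.
  + move=> j a b; case: (leqP j k) => h.
    * rewrite YT //; exact: Ht.
    * rewrite YM; last lia.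
      have := LB T G (fun i j h => A i j h) n j a ltac:(lia) (leqnn n) ltac:(lia).
      rewrite Ht //. have := M0 n j. rewrite AT // Ht //; lia.
- move=> i j /andP[/andP[/andP[a b] c] d]; rewrite /Y; case: ltnP => h //.
  have e : j = k by lia. subst j. by rewrite MX.
- move=> Z GZ AZ i j /andP[/andP[a b] c]; rewrite /Y; case: ltnP => h.
  + by rewrite AZ // /in_left intri //; lia.
  + exact: LB.
Qed.

Theorem mainTheorem6 (n k : nat) (hk1 : 1 <= k) (hkn : k <= n) :
  (forall X : tarray, right_Gog_trapezoid n k X ->
     exists Y : tarray, smallest_Gog_ext n (in_right n k) X Y /\
       (forall i j, in_tri n i j -> j + k <= i -> Y i j = j)) /\
  (forall X : tarray, left_Gog_trapezoid n k X ->
     exists Y : tarray, smallest_Gog_ext n (in_left n k) X Y /\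
       (forall i j, in_tri n i j -> k <= j ->
          Y i j = \max_(l < (j - k).+1) (X (i - l) k + (j - k - l)))).
Proof.
split => X H; [exact: part1 | exact: part2].
Qed.
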